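(* Let $p\ge q$ and $n\ge 1$ be positive integers and let $B$ be a $p\times q$ matrix. Let $C$ be the $(nq+p)\times(nq+p)$ block matrix $$C=\begin{bmatrix} 0 & B & B & \cdots & B\\ B^T & 0 & I & \cdots & I\\ B^T & I & 0 & \cdots & I\\ \vdots & \vdots & \vdots & \ddots & \vdots\\ B^T & I & I & \cdots & 0\end{bmatrix}$$ (one block of size $p$ followed by $n$ blocks of size $q$), and let $D$ be the $(np+q)\times(np+q)$ block matrix $$D=\begin{bmatrix} 0 & B^T & B^T & \cdots & B^T\\ B & 0 & I & \cdots & I\\ B & I & 0 & \cdots & I\\ \vdots & \vdots & \vdots & \ddots & \vdots\\ B & I & I & \cdots & 0\end{bmatrix}$$ (one block of size $q$ followed by $n$ blocks of size $p$). Then $D\oplus 0_{p-q}$ and $C\oplus\underbrace{(J-I)_n\oplus\cdots\oplus(J-I)_n}_{p-q\text{ times}}$ are cospectral.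
   Context: $I$ denotes an identity matrix and $0$ a zero matrix of appropriate size; $0_m$ is the $m\times m$ zero matrix; $(J-I)_n$ is the $n\times n$ matrix with zeros on the diagonal and ones elsewhere. For matrices $X,Y$, $X\oplus Y=\begin{bmatrix} X&0\\0&Y\end{bmatrix}$. Two square matrices are cospectral if they have the same eigenvalues with the same multiplicities. *)

(* Defs.v *)
From HB Require Import structures.
From mathcomp Require Import all_boot all_order all_algebra.
Set Implicit Arguments. Unset Strict Implicit. Unset Printing Implicit Defensive.
Import Order.TTheory GRing.Theory Num.Theory.
Local Open Scope ring_scope.

Definition mxnat (R : zmodType) m k (X : 'M[R]_(m, k)) (a b : nat) : R :=
  match @insub _ (fun x => x < m)%N 'I_m a, @insub _ (fun x => x < k)%N 'I_k b with
  | Some i, Some j => X i j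
  | _, _ => 0
  end.

(* The block matrix of size a + n*b
      [ 0  X  X ... X ]
      [ Y  0  I ... I ]
      [ Y  I  0 ... I ]
      [ ...           ]
      [ Y  I  I ... 0 ]
   (one block of size a, then n blocks of size b), with X : a x b, Y : b x a.
   Index k >= a of the big matrix lies in the block (k - a) %/ b at offset
   (k - a) %% b. *)
Definition blockC (R : nzRingType) (n a b : nat) (X : 'M[R]_(a, b)) (Y : 'M[R]_(b, a))
  : 'M[R]_(a + n * b) :=
  \matrix_(i < a + n * b, j < a + n * b)
    if (i < a)%N then
      if (j < a)%N then 0 else mxnat X i ((j - a) %% b)%N
    else
      if (j < a)%N then mxnat Y ((i - a) %% b)%N j
      else if ((((i - a) %/ b) != ((j - a) %/ b)) && (((i - a) %% b) == ((j - a) %% b)))%N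
           then 1 else 0.

Definition JmI (R : nzRingType) (n : nat) : 'M[R]_n :=
  \matrix_(i, j) (if i != j then 1 else 0).

Definition dsum (R : nzRingType) m k (X : 'M[R]_m) (Y : 'M[R]_k) : 'M[R]_(m + k) :=
  block_mx X 0 0 Y.

(* Cospectral: same eigenvalues with the same (algebraic) multiplicities,
   i.e. same characteristic polynomial (this also forces equal sizes). *)
Definition cospectral (R : nzRingType) m k (X : 'M[R]_m) (Y : 'M[R]_k) : Prop :=
  char_poly X = char_poly Y.

(* Main.v *)
Require Import Defs.
From HB Require Import structures.
From mathcomp Require Import all_boot all_order all_algebra ring.
Import Order.TTheory GRing.Theory Num.Theory.
Local Open Scope ring_scope.
Set Implicit Arguments. Unset Strict Implicit.

Section Gen.
Variable S : comNzRingType.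

Lemma sylvester a b (t : S) (X : 'M[S]_(a, b)) (Y : 'M[S]_(b, a)) :
  t ^+ b * \det (t%:M - X *m Y) = t ^+ a * \det (t%:M - Y *m X).
Proof.
pose N := block_mx (t%:M : 'M_a) X Y (1%:M : 'M_b).
pose N' := block_mx (1%:M : 'M_a) X Y (t%:M : 'M_b).
have e1 : N' *m block_mx (t%:M : 'M_a) 0 0 (1%:M : 'M_b)
        = block_mx (1%:M : 'M_a) 0 0 (t%:M : 'M_b) *m N.
  by rewrite !mulmx_block !mulmx0 !mul0mx ?addr0 ?add0r
     !mul_mx_scalar !mul_scalar_mx !scale1r.
have dN : \det N = \det (t%:M - X *m Y).
  have : block_mx (1%:M : 'M_a) (- X) 0 (1%:M : 'M_b) *m N
         = block_mx (t%:M - X *m Y) 0 Y 1%:M.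
    rewrite mulmx_block !mul_scalar_mx !mul_mx_scalar !scale1r !mul0mx !scaler0 ?add0r mulNmx addrN. reflexivity.
  move/(congr1 determinant); rewrite det_mulmx det_ublock !det1 !mul1r => ->.
  by rewrite det_lblock det1 mulr1.
have dN' : \det N' = \det (t%:M - Y *m X).
  have : block_mx (1%:M : 'M_a) 0 (- Y) (1%:M : 'M_b) *m N'
         = block_mx 1%:M X 0 (t%:M - Y *m X).
    rewrite mulmx_block !mul_scalar_mx !mul_mx_scalar !scale1r !mul0mx !scaler0 ?add0r ?addr0 mulNmx addNr [_ + t%:M]addrC. reflexivity.
  move/(congr1 determinant); rewrite det_mulmx det_lblock !det1 !mul1r => ->.
  by rewrite det_ublock det1 mul1r.
move/(congr1 determinant): e1; rewrite !det_mulmx det_ublock det_lblock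
  !det_scalar !expr1n mulr1 mul1r dN dN' => H.
by rewrite -H mulrC.
Qed.


Lemma ML a b N (n : nat) (x : S) (X : 'M[S]_(a, b)) (Y : 'M[S]_(b, a))
   (G : 'M[S]_(N, b)) :
  G^T *m G = n%:R%:M ->
  \det (x%:M - block_mx 0 (X *m G^T) (G *m Y) (G *m G^T - 1%:M))
   * \det ((x + 1 - n%:R)%:M + G *m G^T) * ((x + 1) * (x + 1 - n%:R)) ^+ a
  = (x + 1) ^+ a * ((x + 1) * (x + 1 - n%:R)) ^+ N
    * \det ((x * (x + 1 - n%:R))%:M - n%:R *: (X *m Y)).
Proof.
move=> GG.
set u := x + 1; set s := u - n%:R.
have us : s + n%:R = u by rewrite /s subrK.
set V := s%:M + G *m G^T.
set W := G *m G^T.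
have WW : W *m W = n%:R *: W.
  by rewrite /W mulmxA -(mulmxA G) GG mul_mx_scalar scalemxAl.
have h1 : X *m G^T *m V = u *: (X *m G^T).
  rewrite /V mulmxDr mul_mx_scalar /W mulmxA -(mulmxA X) GG mul_mx_scalar.
  by rewrite -scalemxAl -scalerDl us.
have h2 : (u%:M - W) *m V = (u * s)%:M.
  rewrite /V -/W mulmxBl !mulmxDr -scalar_mxM !mul_mx_scalar mul_scalar_mx WW.
  by rewrite opprD addrA -addrA -opprD -scalerDl us addrK.
have hM : x%:M - block_mx 0 (X *m G^T) (G *m Y) (W - 1%:M)
        = block_mx (x%:M) (- (X *m G^T)) (- (G *m Y)) (u%:M - W).
  rewrite (scalar_mx_block a N) opp_block_mx add_block_mx !subr0 !add0r.
  by rewrite opprB addrA /u raddfD.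
pose Q := block_mx (1%:M : 'M_a) 0 0 V.
have dQ : \det Q = \det V by rewrite /Q det_ublock det1 mul1r.
have hMQ : block_mx (x%:M) (- (X *m G^T)) (- (G *m Y)) (u%:M - W) *m Q
        = block_mx (x%:M) (- (u *: (X *m G^T))) (- (G *m Y)) ((u * s)%:M).
  rewrite /Q mulmx_block !mulmx0 ?addr0 ?add0r !mulmx1 mulNmx h1 h2.
  reflexivity.
pose L := block_mx ((u * s)%:M : 'M_a) (u *: (X *m G^T)) 0 (1%:M : 'M_N).
have dL : \det L = (u * s) ^+ a by rewrite /L det_ublock det1 mulr1 det_scalar.
have hL : L *m block_mx (x%:M) (- (u *: (X *m G^T))) (- (G *m Y)) ((u * s)%:M)
   = block_mx (u *: ((x * s)%:M - n%:R *: (X *m Y))) 0 (- (G *m Y)) ((u * s)%:M).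
  rewrite /L mulmx_block !mul0mx !mul1mx ?add0r !mul_scalar_mx.
  rewrite mul_mx_scalar scalerN addNr mulmxN -scalemxAl -mulmxA (mulmxA (G^T)) GG.
  rewrite mul_scalar_mx -scalemxAr scalerA scale_scalar_mx scalerBr.
  rewrite scale_scalar_mx scalerA.
  have -> : u * s * x = u * (x * s) by ring.
  reflexivity.
have := congr1 determinant hL.
rewrite det_mulmx dL det_lblock detZ det_scalar -hMQ det_mulmx dQ -hM.
rewrite -/W.
move=> H. rewrite mulrC H. ring.
Qed.

End Gen.

Lemma ML2 (S : idomainType) a b N (n : nat) (x : S) (X : 'M[S]_(a, b)) (Y : 'M[S]_(b, a))
   (G : 'M[S]_(N, b)) :
  x + 1 != 0 -> x + 1 - n%:R != 0 ->
  G^T *m G = n%:R%:M ->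
  (x + 1) ^+ b * (x + 1 - n%:R) ^+ a *
    \det (x%:M - block_mx 0 (X *m G^T) (G *m Y) (G *m G^T - 1%:M))
  = (x + 1) ^+ N * (x + 1 - n%:R) ^+ b
    * \det ((x * (x + 1 - n%:R))%:M - n%:R *: (X *m Y)).
Proof.
move=> u0 s0 GG.
have H := ML x X Y GG.
have F := sylvester (x + 1 - n%:R) (- G) (G^T).
move: H F.
set u := x + 1; set s := u - n%:R.
have us : s + n%:R = u by rewrite /s subrK.
rewrite mulNmx mulmxN !opprK GG -raddfD us det_scalar.
set dM := \det _; set dV := \det _; set dt := \det _.
move=> H F.
have k0 : u ^+ a * s ^+ N != 0 by rewrite mulf_neq0 // expf_neq0.
apply: (mulIf k0).
have -> : u ^+ b * s ^+ a * dM * (u ^+ a * s ^+ N)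
        = dM * (s ^+ N * u ^+ b) * (u ^+ a * s ^+ a) by ring.
rewrite -F.
have -> : dM * (s ^+ b * dV) * (u ^+ a * s ^+ a) = s ^+ b * (dM * dV * (u * s) ^+ a)
  by rewrite exprMn; ring.
rewrite H exprMn; ring.
Qed.

Definition Gm (S : nzRingType) b N : 'M[S]_(N, b) :=
  \matrix_(i < N, j < b) (((i %% b)%N == j :> nat)%:R : S).

Lemma mxnatE (S : zmodType) m k (X : 'M[S]_(m, k)) (i0 j0 : nat) (i : 'I_m) (j : 'I_k) :
  i0 = i -> j0 = j -> mxnat X i0 j0 = X i j.
Proof. by move=> -> ->; rewrite /mxnat !valK. Qed.

Lemma sum_delta (S : nzRingType) b (F : 'I_b -> S) c (hc : (c < b)%N) :
  \sum_(l < b) F l * ((c == l :> nat)%:R) = F (Ordinal hc).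
Proof.
rewrite (bigD1 (Ordinal hc)) //= eqxx mulr1 big1 ?addr0 // => l hl.
have -> : (c == l :> nat) = false.
  by apply/negbTE; apply: contra hl => /eqP e; apply/eqP/val_inj.
by rewrite mulr0.
Qed.

Lemma sum_delta' (S : nzRingType) b (F : 'I_b -> S) c (hc : (c < b)%N) :
  \sum_(l < b) ((c == l :> nat)%:R) * F l = F (Ordinal hc).
Proof.
rewrite (bigD1 (Ordinal hc)) //= eqxx mul1r big1 ?addr0 // => l hl.
have -> : (c == l :> nat) = false.
  by apply/negbTE; apply: contra hl => /eqP e; apply/eqP/val_inj.
by rewrite mul0r.
Qed.

Lemma bpos n b (i : 'I_(n * b)) : (0 < b)%N.
Proof. case: b i => [|b] // i; have := ltn_ord i; by rewrite {2}muln0. Qed.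

Lemma BF (S : comNzRingType) n a b (X : 'M[S]_(a, b)) (Y : 'M[S]_(b, a)) :
  blockC n X Y = block_mx 0 (X *m (Gm S b (n * b))^T) (Gm S b (n * b) *m Y)
                   (Gm S b (n * b) *m (Gm S b (n * b))^T - 1%:M).
Proof.
apply/matrixP => i j; rewrite /blockC mxE.
case: split_ordP => [i' ->|i' ->]; case: split_ordP => [j' ->|j' ->].
- by rewrite block_mxEul /= mxE.
- have b0 := bpos j'.
  rewrite block_mxEur /= addKn mxE.
  have -> : mxnat X i' (j' %% b) = X i' (Ordinal (ltn_pmod j' b0)) by apply: mxnatE.
  by rewrite -(sum_delta _ (ltn_pmod j' b0)); apply: eq_bigr => l _; rewrite !mxE.
- have b0 := bpos i'.
  rewrite block_mxEdl /= addKn mxE.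
  have -> : mxnat Y (i' %% b) j' = Y (Ordinal (ltn_pmod i' b0)) j' by apply: mxnatE.
  by rewrite -(sum_delta' (fun l => Y l j') (ltn_pmod i' b0)); apply: eq_bigr => l _; rewrite !mxE.
- have b0 := bpos i'.
  rewrite block_mxEdr /= !addKn !mxE.
  have -> : \sum_(l < b) Gm S b (n * b) i' l * (Gm S b (n * b))^T l j' = ((i' %% b)%N == (j' %% b)%N)%:R.
    rewrite -(sum_delta (fun l : 'I_b => ((i' %% b)%N == l :> nat)%:R : S) (ltn_pmod j' b0)) /=.
    by apply: eq_bigr => l _; rewrite !mxE.
  have [e|ne] := eqVneq (i' %% b)%N (j' %% b)%N; last first.
    rewrite andbF /=.
    have -> : (i' == j') = false.
      by apply/negbTE; apply: contra ne => /eqP ->.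
    by rewrite subr0.
  rewrite andbT.
  have -> : (i' == j') = ((i' %/ b)%N == (j' %/ b)%N).
    apply/idP/idP => [/eqP -> //|/eqP ed]; apply/eqP/val_inj => /=.
    by rewrite (divn_eq i' b) ed e -divn_eq.
  case: eqP => _ /=; [by rewrite subrr | by rewrite subr0].
Qed.

Lemma GtG (S : comNzRingType) n b : (Gm S b (n * b))^T *m Gm S b (n * b) = n%:R%:M.
Proof.
apply/matrixP => k l; rewrite !mxE.
under eq_bigr => i _ do rewrite !mxE.
rewrite -(big_mkord xpredT (fun i => ((i %% b)%N == k :> nat)%:R * ((i %% b)%N == l :> nat)%:R : S)).
elim: n => [|n IH]; first by rewrite mul0n big_geq // mul0rn.
rewrite mulSn addnC (@big_cat_nat _ _ _ (n * b)) //= ?leq_addr // IH.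
rewrite -{1}[(n * b)%N]add0n big_addn addKn.
under eq_bigr => i _ do rewrite addnC modnMDl.
rewrite big_mkord.
under eq_bigr => i _ do rewrite modn_small //.
rewrite (bigD1 l) //= eqxx mulr1 big1 ?addr0; last first.
  move=> i hi; have -> : (i == l :> nat) = false by exact: negbTE hi.
  by rewrite mulr0.
have [->|ne] := eqVneq k l.
  by rewrite eqxx /= !mulr1n -natr1.
have -> : (l == k :> nat) = false by rewrite eq_sym; exact: negbTE ne.
by rewrite !mulr0n addr0.
Qed.


Lemma XaddC_neq0 (R : nzRingType) (c : R) : 'X + c%:P != 0.
Proof. by rewrite -size_poly_eq0 size_XaddC. Qed.

Lemma u_neq0 (R : nzRingType) : ('X + 1 : {poly R}) != 0.
Proof. by rewrite -polyC1 XaddC_neq0. Qed.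

Lemma s_neq0 (R : nzRingType) n : ('X + 1 - n%:R : {poly R}) != 0.
Proof. by rewrite -addrA -polyC_natr -polyC1 -polyCB XaddC_neq0. Qed.

Lemma char_dsum (R : comNzRingType) m k (A : 'M[R]_m) (B : 'M[R]_k) :
  char_poly (dsum A B) = char_poly A * char_poly B.
Proof. by rewrite /char_poly /dsum char_block_diag_mx det_ublock. Qed.

Lemma char_cast (R : comNzRingType) m k (e : m = k) (A : 'M[R]_m) :
  char_poly (castmx (e, e) A) = char_poly A.
Proof. by case: k / e; rewrite castmx_id. Qed.

Lemma char_size0 (R : comNzRingType) k (A : 'M[R]_k) : k = 0%N -> char_poly A = 1.
Proof. by move=> e; subst k; rewrite /char_poly det_mx00. Qed.

Lemma char_mxdiag (R : comNzRingType) m (p_ : 'I_m -> nat) (B_ : forall i, 'M[R]_(p_ i)) :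
  char_poly (mxdiag B_) = \prod_i char_poly (B_ i).
Proof.
elim: m p_ B_ => [|m IH] p_ B_.
  by rewrite [RHS]big_ord0; apply: char_size0; exact: big_ord0.
rewrite mxdiag_recl char_cast /char_poly char_block_diag_mx det_ublock.
by rewrite big_ord_recl -IH.
Qed.

Lemma char0 (R : comNzRingType) k : char_poly (0 : 'M[R]_k) = 'X ^+ k.
Proof. by rewrite /char_poly /char_poly_mx map_mx0 subr0 det_scalar. Qed.

Lemma mapG (R : nzRingType) b N :
  map_mx (@polyC R) (Gm R b N) = Gm {poly R} b N.
Proof. by apply/matrixP => i j; rewrite !mxE polyC_natr. Qed.

Lemma charC (R : idomainType) n a b (X : 'M[R]_(a, b)) (Y : 'M[R]_(b, a)) :
  ('X + 1) ^+ b * ('X + 1 - n%:R) ^+ a * char_poly (blockC n X Y)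
  = ('X + 1) ^+ (n * b) * ('X + 1 - n%:R) ^+ b
    * \det (('X * ('X + 1 - n%:R))%:M
            - n%:R *: (map_mx (@polyC R) X *m map_mx (@polyC R) Y)).
Proof.
rewrite /char_poly /char_poly_mx BF map_block_mx map_mx0 map_mxB map_mx1 !map_mxM
  -map_trmx mapG.
apply: ML2; [exact: u_neq0 | exact: s_neq0 | exact: GtG].
Qed.

Lemma charJ (R : idomainType) n :
  ('X + 1) * char_poly (JmI R n) = ('X + 1) ^+ n * ('X + 1 - n%:R).
Proof.
pose c := const_mx 1 : 'M[{poly R}]_(n, 1).
pose r := const_mx 1 : 'M[{poly R}]_(1, n).
have hJ : map_mx (@polyC R) (JmI R n) = c *m r - 1%:M.
  apply/matrixP => i j; rewrite !mxE big_ord1 !mxE mulr1.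
  by case: eqP => _ /=; rewrite ?subrr ?subr0.
have hr : r *m c = (n%:R : {poly R})%:M.
  apply/matrixP => i j; rewrite !mxE.
  under eq_bigr => k _ do rewrite !mxE mulr1.
  by rewrite sumr_const card_ord !ord1 eqxx mulr1n.
have := sylvester ('X + 1) c r.
rewrite hr -raddfB det_scalar !expr1 => <-.
by rewrite /char_poly /char_poly_mx hJ opprB addrA raddfD.
Qed.

Theorem theorem3p15 (R : realFieldType) (p q n : nat) (B : 'M[R]_(p, q)) :
  (1 <= q)%N -> (q <= p)%N -> (1 <= n)%N ->
  cospectral
    (dsum (blockC n B^T B) (0 : 'M[R]_(p - q)))
    (dsum (blockC n B B^T) (\mxdiag_(i < p - q) JmI R n)).
Proof.
move=> _ hqp _.
rewrite /cospectral !char_dsum char0 char_mxdiag prodr_const card_ord.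
have HD := charC n B^T B.
have HC := charC n B B^T.
have HJ := charJ R n.
rewrite -map_trmx in HD HC.
have Syl := sylvester ('X * ('X + 1 - n%:R)) (n%:R *: map_mx (@polyC R) B)
   (map_mx (@polyC R) B)^T.
rewrite -scalemxAl -scalemxAr in Syl.
move: HD HC HJ Syl.
set P := map_mx (@polyC R) B.
set x : {poly R} := 'X.
set u := x + 1.
set s := u - n%:R.
set t := x * s.
set dq := \det (t%:M - n%:R *: (P^T *m P)).
set dp := \det (t%:M - n%:R *: (P *m P^T)).
set cD := char_poly _.
set cC := char_poly (blockC n B B^T).
set cJ := char_poly _.
have u0 : u != 0 by exact: u_neq0.
have s0 : s != 0 by exact: s_neq0.
have x0 : x != 0 by rewrite /x polyX_eq0.
have t0 : t != 0 by rewrite /t mulf_neq0.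
have te : forall k, t ^+ k = x ^+ k * s ^+ k by move=> k; rewrite /t exprMn.
have pe : p = (q + (p - q))%N by rewrite subnKC.
move: te; clearbody dq dp cD cC cJ t s u x P.
set e := (p - q)%N in pe *.
clearbody e.
move=> te HD HC HJ Syl.
rewrite pe in HD HC Syl.
rewrite mulnDr !exprD !exprM in HD HC.
rewrite exprD (te e) in Syl.
have k0 : (u ^+ q * u ^+ e) * s ^+ q * (u ^+ q * (s ^+ q * s ^+ e)) * u ^+ e * t ^+ q != 0.
  by rewrite !mulf_neq0 // expf_neq0.
apply: (mulIf k0).
have -> : cD * x ^+ e * ((u ^+ q * u ^+ e) * s ^+ q * (u ^+ q * (s ^+ q * s ^+ e)) * u ^+ e * t ^+ q)
  = (u ^+ q * u ^+ e * s ^+ q * cD) * (x ^+ e * (u ^+ q * (s ^+ q * s ^+ e)) * u ^+ e * t ^+ q)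
  by ring.
have -> : cC * cJ ^+ e * ((u ^+ q * u ^+ e) * s ^+ q * (u ^+ q * (s ^+ q * s ^+ e)) * u ^+ e * t ^+ q)
  = (u ^+ q * (s ^+ q * s ^+ e) * cC) * ((u ^+ q * u ^+ e) * s ^+ q) * (u * cJ) ^+ e * t ^+ q
  by rewrite exprMn; ring.
rewrite HD HC HJ exprMn.
have -> : u ^+ n ^+ q * s ^+ q * dp * (u ^+ q * u ^+ e * s ^+ q) * (u ^+ n ^+ e * s ^+ e) * t ^+ q
  = u ^+ n ^+ q * s ^+ q * (u ^+ q * u ^+ e * s ^+ q) * (u ^+ n ^+ e * s ^+ e) * (t ^+ q * dp)
  by ring.
rewrite Syl; ring.
Qed.
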